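(* Let $N>1$, $d\ge1$, and let $f:\mathbb{R}^{N\times d}\times\mathbb{R}^{N\times 3}\to Y$ (any set $Y$) satisfy $f(s,\vec r o^T)=f(s,\vec r)$ for all $o\in\mathrm{O}(3)$ and $f(s,\vec r+\mathbf{1}t)=f(s,\vec r)$ for all $t\in\mathbb{R}^{1\times 3}$, where $\mathbf 1\in\mathbb{R}^{N\times1}$ is the all-ones column. Let $g$ be any function with the properties stated in the context, and for each molecule $(s,\vec r)$ let $\vec E_1=g(\mathrm{LE}_1)$. Then there exist functions $\varphi$, $\rho$ and $h$ such that for all $(s,\vec r)$, $$f(s,\vec r)=h(z_1),\qquad z_1=\rho\Big(\sum_{j=1}^N\varphi\big(\mathrm{Concatenate}(\vec r_{1j}\vec E_1^T,\ \tilde s_j)\big)\Big).$$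
   Context: For a molecule with features $s\in\mathbb{R}^{N\times d}$ (row $s_j$) and coordinates $\vec r\in\mathbb{R}^{N\times 3}$ (row $\vec r_j$), set $\vec r_{ij}=\vec r_i-\vec r_j$, node identity features $\tilde s_j=\mathrm{Concatenate}(s_j,j)\in\mathbb{R}^{d+1}$ and local environments $\mathrm{LE}_i=\{(\tilde s_j,\vec r_{ij}): j=1,\dots,N\}$. $\mathrm{O}(3)=\{Q\in\mathbb{R}^{3\times3}:QQ^T=I\}$. The function $g$ maps such local environments to $\mathbb{R}^{3\times3}$, satisfies $g(\{(\tilde s_j,\vec r_{ij}o^T)\}_j)=g(\{(\tilde s_j,\vec r_{ij})\}_j)o^T$ for all $o\in\mathrm{O}(3)$, and for every molecule and $i$ the matrix $\vec E_i=g(\mathrm{LE}_i)$, with $k=\mathrm{rank}(\vec E_i)$, has its first $k$ rows forming an orthonormal basis of $\mathrm{span}\{\vec r_{ij}:j=1,\dots,N\}$ and its remaining rows zero. *)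

(* Defs.v *)
From HB Require Import structures.
From mathcomp Require Import all_boot all_order all_algebra.
From mathcomp Require Import finmap.
From mathcomp Require Import reals.
Set Implicit Arguments. Unset Strict Implicit. Unset Printing Implicit Defensive.
Import Order.TTheory GRing.Theory Num.Theory.
Local Open Scope ring_scope.
Local Open Scope fset_scope.

Section Molecules.
Variables (R : realType) (N d : nat).

Definition rij (r : 'M[R]_(N, 3)) (i j : 'I_N) : 'rV[R]_3 := row i r - row j r.

(* node identity feature  \tilde s_j = Concatenate(s_j, j), with the paper's
   1-based index j = 1..N  (Rocq ordinal j : 'I_N stands for paper index j+1) *)
Definition stilde (s : 'M[R]_(N, d)) (j : 'I_N) : 'rV[R]_(d + 1) :=
  row_mx (row j s) (const_mx (j.+1)%:R).

Definition LE (s : 'M[R]_(N, d)) (r : 'M[R]_(N, 3)) (i : 'I_N)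
  : {fset ('rV[R]_(d + 1) * 'rV[R]_3)} :=
  [fset (stilde s j, rij r i j) | j : 'I_N].

Definition orthogonal3 (o : 'M[R]_3) : Prop := o *m o^T = 1%:M.

Definition frame_ok (E : 'M[R]_3) (r : 'M[R]_(N, 3)) (i : 'I_N) : Prop :=
  let k := \rank E in
  [/\ (forall a b : 'I_3, (a < k)%N -> (b < k)%N ->
         row a E *m (row b E)^T = ((a == b)%:R)%:M),
      (forall a : 'I_3, (k <= a)%N -> row a E = 0) &
      (E == \matrix_(j < N) rij r i j)%MS].

Definition frame_fun
  (g : {fset ('rV[R]_(d + 1) * 'rV[R]_3)} -> 'M[R]_3) : Prop :=
  (forall (s : 'M[R]_(N, d)) (r : 'M[R]_(N, 3)) (i : 'I_N) (o : 'M[R]_3),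
      orthogonal3 o ->
      g [fset (stilde s j, rij r i j *m o^T) | j : 'I_N] = g (LE s r i) *m o^T)
  /\ (forall (s : 'M[R]_(N, d)) (r : 'M[R]_(N, 3)) (i : 'I_N),
      frame_ok (g (LE s r i)) r i).

End Molecules.

(* Main.v *)
Require Import Defs.
From HB Require Import structures.
From mathcomp Require Import all_boot all_order all_algebra.
From mathcomp Require Import finmap.
From mathcomp Require Import reals.
From mathcomp Require Import ring lra.
Import Order.TTheory GRing.Theory Num.Theory.
Local Open Scope ring_scope.
Definition dot {R : realType} (u v : 'rV[R]_3) := (u *m v^T) 0 0.
Definition cp {R : realType} (u : 'rV[R]_3) (n : nat) := u 0 (inord n).
Lemma dot3 {R : realType} (u v : 'rV[R]_3) : dot u v = cp u 0 * cp v 0 + cp u 1 * cp v 1 + cp u 2 * cp v 2.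
Proof.
rewrite /dot mxE !big_ord_recr big_ord0 /= add0r !mxE /cp.
by congr (_ * _ + _ * _ + _ * _); congr (_ _ _); apply/val_inj; rewrite /= inordK.
Qed.
Lemma dotC {R : realType} (u v : 'rV[R]_3) : dot u v = dot v u.
Proof. by rewrite !dot3; ring. Qed.
Lemma dot0 {R : realType} (u : 'rV[R]_3) : dot u 0 = 0.
Proof. by rewrite /dot trmx0 mulmx0 mxE. Qed.
Definition mkv {R : realType} (a b c : R) : 'rV[R]_3 :=
  \row_(i < 3) (if val i == 0%N then a else if val i == 1%N then b else c).
Lemma cp_mkv0 {R : realType} (a b c : R) : cp (mkv a b c) 0 = a.
Proof. by rewrite /cp !mxE /= !inordK. Qed.
Lemma cp_mkv1 {R : realType} (a b c : R) : cp (mkv a b c) 1 = b.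
Proof. by rewrite /cp !mxE /= !inordK. Qed.
Lemma cp_mkv2 {R : realType} (a b c : R) : cp (mkv a b c) 2 = c.
Proof. by rewrite /cp !mxE /= !inordK. Qed.
Definition cross {R : realType} (u v : 'rV[R]_3) := mkv (cp u 1 * cp v 2 - cp u 2 * cp v 1)
  (cp u 2 * cp v 0 - cp u 0 * cp v 2) (cp u 0 * cp v 1 - cp u 1 * cp v 0).
Lemma cross_dotl {R : realType} (u v : 'rV[R]_3) : dot (cross u v) u = 0.
Proof. by rewrite dot3 /cross; rewrite !(cp_mkv0, cp_mkv1, cp_mkv2); ring. Qed.
Lemma cross_dotr {R : realType} (u v : 'rV[R]_3) : dot (cross u v) v = 0.
Proof. by rewrite dot3 /cross; rewrite !(cp_mkv0, cp_mkv1, cp_mkv2); ring. Qed.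
Lemma cross_norm {R : realType} (u v : 'rV[R]_3) : dot (cross u v) (cross u v) = dot u u * dot v v - dot u v ^+ 2.
Proof. by rewrite !dot3 /cross; rewrite !(cp_mkv0, cp_mkv1, cp_mkv2); ring. Qed.

Definition sel3 {R : realType} (u v w : 'rV[R]_3) (a : 'I_3) := if val a == 0%N then u else if val a == 1%N then v else w.
Definition mk3 {R : realType} (u v w : 'rV[R]_3) : 'M[R]_3 := \matrix_(a, c) sel3 u v w a 0 c.
Lemma row_mk3 {R : realType} (u v w : 'rV[R]_3) a : row a (mk3 u v w) = sel3 u v w a.
Proof. by apply/rowP => c; rewrite !mxE. Qed.
Lemma mulmxT_dot {R : realType} (A B : 'M[R]_3) a b : (A *m B^T) a b = dot (row a A) (row b B).
Proof. rewrite /dot !mxE; apply: eq_bigr => c _; by rewrite !mxE. Qed.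

Lemma mk3_orth {R : realType} (u v w : 'rV[R]_3) : dot u u = 1 -> dot v v = 1 -> dot w w = 1 ->
  dot u v = 0 -> dot u w = 0 -> dot v w = 0 ->
  mk3 u v w *m (mk3 u v w)^T = 1%:M.
Proof.
move=> uu vv ww uv uw vw; apply/matrixP => a b.
rewrite mulmxT_dot !row_mk3 !mxE /sel3.
by case: a b => [[|[|[|//]]] ?] [[|[|[|//]]] ?] /=; rewrite ?(dotC v u) ?(dotC w u) ?(dotC w v).
Qed.

Lemma unit_perp {R : realType} (u : 'rV[R]_3) : dot u u = 1 -> exists p, dot p p = 1 /\ dot u p = 0.
Proof.
move=> uu.
have [h0|hn] := eqVneq (cp u 0 ^+ 2 + cp u 1 ^+ 2) 0.
  have h00 : cp u 0 = 0 by apply/eqP; rewrite -sqrf_eq0; apply/eqP; nra.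
  exists (mkv 1 0 0); rewrite !dot3; rewrite !(cp_mkv0, cp_mkv1, cp_mkv2); split; [ring|].
  by rewrite h00; ring.
have hp : 0 < cp u 0 ^+ 2 + cp u 1 ^+ 2.
  by rewrite lt_def hn /= addr_ge0 // sqr_ge0.
set t := Num.sqrt (cp u 0 ^+ 2 + cp u 1 ^+ 2).
have t2 : t ^+ 2 = cp u 0 ^+ 2 + cp u 1 ^+ 2 by rewrite sqr_sqrtr // ltW.
have tn : t != 0 by rewrite sqrtr_eq0 -ltNge.
exists (mkv (- cp u 1 / t) (cp u 0 / t) 0); rewrite !dot3; rewrite !(cp_mkv0, cp_mkv1, cp_mkv2); split.
  by apply: (mulIf (expf_neq0 2 tn)); rewrite mul1r {2}t2; field.
by field.
Qed.

Lemma frame_complete {R : realType} (E : 'M[R]_3) :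
  (forall a b : 'I_3, (a < \rank E)%N -> (b < \rank E)%N ->
         row a E *m (row b E)^T = ((a == b)%:R)%:M) ->
  (forall a : 'I_3, (\rank E <= a)%N -> row a E = 0) ->
  exists o : 'M[R]_3, o *m o^T = 1%:M /\ forall a, row a E = 0 \/ row a E = row a o.
Proof.
have hk := rank_leq_row E.
move: (\rank E) hk => k hk H1 H2.
have D : forall a b : 'I_3, (a < k)%N -> (b < k)%N -> dot (row a E) (row b E) = (a == b)%:R.
  by move=> a b ha hb; rewrite /dot H1 // mxE eqxx mulr1n.
set u := row 0 E; set v := row 1 E; set w := row 2%R E.
have Eq : E = mk3 u v w.
  apply/row_matrixP => a; rewrite row_mk3 /sel3 /u /v /w.
  by case: a => [[|[|[|//]]] ?] /=; congr row; apply/val_inj.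
case: k hk H1 H2 D => [|[|[|[|//]]]] _ H1 H2 D.
- exists 1%:M; split; first by rewrite trmx1 mulmx1.
  by move=> a; left; apply: H2.
- have uu : dot u u = 1 by exact: (D 0 0 isT isT).
  have [p [pp up]] := @unit_perp R u uu.
  exists (mk3 u p (cross u p)); split.
    apply: mk3_orth => //.
    - by rewrite cross_norm pp up uu; ring.
    - by rewrite dotC cross_dotl.
    - by rewrite dotC cross_dotr.
  move=> a; rewrite row_mk3 /sel3; case: a => [[|[|[|//]]] ?] /=.
  + by right; congr row; apply/val_inj.
  + by left; apply: H2.
  + by left; apply: H2.
- have uu : dot u u = 1 by exact: (D 0 0 isT isT).
  have vv : dot v v = 1 by exact: (D 1 1 isT isT).
  have uv : dot u v = 0 by exact: (D 0 1 isT isT).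
  exists (mk3 u v (cross u v)); split.
    apply: mk3_orth => //.
    - by rewrite cross_norm uu vv uv; ring.
    - by rewrite dotC cross_dotl.
    - by rewrite dotC cross_dotr.
  move=> a; rewrite row_mk3 /sel3; case: a => [[|[|[|//]]] ?] /=.
  + by right; congr row; apply/val_inj.
  + by right; congr row; apply/val_inj.
  + by left; apply: H2.
- exists E; split.
    rewrite Eq; apply: mk3_orth.
    + exact: (D 0 0 isT isT).
    + exact: (D 1 1 isT isT).
    + exact: (D 2%R 2%R isT isT).
    + exact: (D 0 1 isT isT).
    + exact: (D 0 2%R isT isT).
    + exact: (D 1 2%R isT isT).
  by move=> a; right.
Qed.

Lemma EoT {R : realType} (E o : 'M[R]_3) : o *m o^T = 1%:M ->
  (forall a, row a E = 0 \/ row a E = row a o) -> E *m o^T = E *m E^T.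
Proof.
move=> oo H; apply/matrixP => a b; rewrite !mulmxT_dot.
have od : forall a b, dot (row a o) (row b o) = (a == b)%:R.
  by move=> a' b'; rewrite -mulmxT_dot oo mxE.
case: (H a) => Ha; first by rewrite Ha (dotC 0 (row b o)) (dotC 0 (row b E)) !dot0.
case: (H b) => Hb; last by rewrite Ha Hb.
rewrite Hb dot0 Ha; have [eab|neq] := eqVneq a b.
  by move: Hb; rewrite -eab Ha => ->; rewrite dot0.
by rewrite od (negbTE neq).
Qed.

Theorem proposition7 (R : realType) (N d : nat) (hN : (1 < N)%N) (hd : (0 < d)%N)
  (Y : Type) (f : 'M[R]_(N, d) -> 'M[R]_(N, 3) -> Y)
  (f_O3 : forall (s : 'M[R]_(N, d)) (r : 'M[R]_(N, 3)) (o : 'M[R]_3),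
      orthogonal3 o -> f s (r *m o^T) = f s r)
  (f_transl : forall (s : 'M[R]_(N, d)) (r : 'M[R]_(N, 3)) (t : 'rV[R]_3),
      f s (r + (const_mx 1 : 'cV[R]_N) *m t) = f s r)
  (g : {fset ('rV[R]_(d + 1) * 'rV[R]_3)} -> 'M[R]_3)
  (hg : frame_fun N g) :
  let i1 : 'I_N := Ordinal (ltnW hN) in
  exists (Z : zmodType) (W : Type) (phi : 'rV[R]_(3 + (d + 1)) -> Z)
         (rho : Z -> W) (h : W -> Y),
    forall (s : 'M[R]_(N, d)) (r : 'M[R]_(N, 3)),
      let E1 := g (LE s r i1) in
      f s r = h (rho (\sum_(j < N) phi (row_mx (rij r i1 j *m E1^T) (stilde s j)))).
Proof.
move=> i1.
have [_ hg2] := hg.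
pose li : 'I_(3 + (d + 1)) := rshift 3 (rshift d (ord0 : 'I_1)).
pose phi (x : 'rV[R]_(3 + (d + 1))) : 'M[R]_(N, 3 + (d + 1)) :=
  \matrix_(i, c) (if x 0 li == (i.+1)%:R then x 0 c else 0).
exists 'M[R]_(N, 3 + (d + 1)), 'M[R]_(N, 3 + (d + 1)), phi, id,
  (fun M => f (lsubmx (rsubmx M)) (- lsubmx M)).
move=> s r E1 /=.
pose x j := row_mx (rij r i1 j *m E1^T) (stilde s j).
have xli : forall j, x j 0 li = (j.+1)%:R.
  by move=> j; rewrite /x /li row_mxEr /stilde row_mxEr mxE.
have xl : forall j c, x j 0 (lshift (d + 1) c) = (rij r i1 j *m E1^T) 0 c.
  by move=> j c; rewrite /x row_mxEl.
have xr : forall j c, x j 0 (rshift 3 (lshift 1 c)) = s j c.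
  by move=> j c; rewrite /x row_mxEr /stilde row_mxEl mxE.
rewrite (eq_bigr (fun j => phi (x j))) //.
clearbody x.
have Hsum : \sum_(j < N) phi (x j) = \matrix_(i, c) x i 0 c.
  apply/matrixP => i c; rewrite summxE !mxE (bigD1 i) //= mxE xli eqxx big1 ?addr0 //.
  move=> j neq; rewrite mxE xli eqr_nat eqSS.
  by have -> : (nat_of_ord j == i) = false by apply/negbTE.
rewrite Hsum.
pose Rm := \matrix_(j < N) rij r i1 j.
have HL : lsubmx (\matrix_(i, c) x i 0 c) = Rm *m E1^T.
  apply/matrixP => i c.
  transitivity ((row i (Rm *m E1^T)) 0 c); last by rewrite mxE.
  by rewrite row_mul rowK [LHS]mxE [LHS]mxE xl.
have HS : lsubmx (rsubmx (\matrix_(i, c) x i 0 c)) = s.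
  by apply/matrixP => i c; rewrite !mxE xr.
rewrite HL HS.
have [H1 H2 H3] := hg2 s r i1.
have [o [oo Ho]] := @frame_complete R _ H1 H2.
have Eo := @EoT R _ _ oo Ho.
move: H3 => /andP [_ /submxP [D HD]].
have HRm : Rm *m E1^T = Rm *m o^T.
  by rewrite /Rm HD -!mulmxA -/E1 Eo.
have HR : Rm = (const_mx 1 : 'cV[R]_N) *m row i1 r - r.
  apply/matrixP => i c.
  by rewrite !mxE big_ord1 /rij !mxE mul1r.
rewrite HRm HR -mulNmx opprB -[r - _]/(r + - ((const_mx 1 : 'cV[R]_N) *m row i1 r)).
rewrite -mulmxN f_O3 ?f_transl //.
Qed.
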